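(* Let $\mathbb{I}>0$, $0<c\le1$, and for $\ell>0$ let $g_c(\ell)=4c\ell^2\int_0^\infty u^2\,\Phi\big(-\frac{u\ell\sqrt{c\mathbb{I}}}{2}\big)\phi(u)\,du$. Then $g_c$ is maximized at $\ell_{opt}=\frac{2.426}{\sqrt{c\,\mathbb{I}}}$ (constant to three decimals), and $$\alpha_{opt}=4\int_0^\infty\Phi\Big(-\frac{u\ell_{opt}\sqrt{c\,\mathbb{I}}}{2}\Big)\phi(u)\,du=0.439$$ up to three decimal places.
   Context: $\Phi,\phi$ are the standard normal cdf and density. $g_c$ is the diffusion speed of the limiting diffusion of additive TMCMC-within-Gibbs for i.i.d. product targets (each coordinate updated with probability tending to $c$), $\mathbb{I}=E_f[(f'/f)^2]$ is the Fisher information of the marginal density $f$, and $\alpha_{opt}$ is the corresponding optimal acceptance rate. *)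

(* Defs.v *)
From Stdlib Require Import Reals.
From Coquelicot Require Import Coquelicot.
Open Scope R_scope.

Definition std_phi (x : R) : R := exp (- x ^ 2 / 2) / sqrt (2 * PI).

Definition std_Phi (x : R) : R :=
  RInt_gen std_phi (Rbar_locally m_infty) (at_point x).

Definition g_c (c I l : R) : R :=
  4 * c * l ^ 2 *
  RInt_gen (fun u => u ^ 2 * std_Phi (- (u * l * sqrt (c * I)) / 2) * std_phi u)
           (at_point 0) (Rbar_locally p_infty).

Definition alpha_acc (c I l : R) : R :=
  4 * RInt_gen (fun u => std_Phi (- (u * l * sqrt (c * I)) / 2) * std_phi u)
           (at_point 0) (Rbar_locally p_infty).

(* Main.v *)
Require Import Defs.
From Stdlib Require Import Reals Lra.
From Coquelicot Require Import Coquelicot.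
Open Scope R_scope.

Definition Limp (h : R -> R) (L : R) :=
  forall eps, 0 < eps -> exists M, forall x, M < x -> Rabs (h x - L) < eps.
Definition Limm (h : R -> R) (L : R) :=
  forall eps, 0 < eps -> exists M, forall x, x < M -> Rabs (h x - L) < eps.

Lemma is_RInt_gen_pinf (f : R -> R) (a L : R) :
  (forall b, a <= b -> ex_RInt f a b) -> Limp (fun b => RInt f a b) L ->
  is_RInt_gen f (at_point a) (Rbar_locally p_infty) L.
Proof.
  intros Hex Hl P [eps HP].
  destruct (Hl eps (cond_pos eps)) as [M HM].
  apply (Filter_prod _ _ _ (fun x => x = a) (fun b => Rmax a M < b)).
  - reflexivity.
  - exists (Rmax a M). auto.
  - intros x y -> Hy. simpl. exists (RInt f a y). split.
    + apply (@RInt_correct R_CompleteNormedModule), Hex. generalize (Rmax_l a M). lra.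
    + apply HP. apply HM. generalize (Rmax_r a M). lra.
Qed.

Lemma is_RInt_gen_minf (f : R -> R) (b L : R) :
  (forall a, a <= b -> ex_RInt f a b) -> Limm (fun a => RInt f a b) L ->
  is_RInt_gen f (Rbar_locally m_infty) (at_point b) L.
Proof.
  intros Hex Hl P [eps HP].
  destruct (Hl eps (cond_pos eps)) as [M HM].
  apply (Filter_prod _ _ _ (fun a => a < Rmin b M) (fun x => x = b)).
  - exists (Rmin b M). auto.
  - reflexivity.
  - intros x y Hx ->. simpl. exists (RInt f x b). split.
    + apply (@RInt_correct R_CompleteNormedModule), Hex. generalize (Rmin_l b M). lra.
    + apply HP. apply HM. generalize (Rmin_r b M). lra.
Qed.
Lemma mono_le (f df : R -> R) (x y : R) :
  x <= y -> (forall t, x <= t <= y -> is_derive f t (df t)) ->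
  (forall t, x <= t <= y -> 0 <= df t) -> f x <= f y.
Proof.
  intros Hxy Hd Hp.
  destruct (MVT_gen f x y df) as [c [Hc Heq]].
  - intros t Ht. apply Hd. rewrite Rmin_left in Ht by lra. rewrite Rmax_right in Ht by lra. lra.
  - intros t Ht. rewrite Rmin_left in Ht by lra. rewrite Rmax_right in Ht by lra.
    apply continuity_pt_filterlim. apply (ex_derive_continuous (K:=R_AbsRing) (V:=R_NormedModule)).
    eexists. apply Hd. lra.
  - rewrite Rmin_left in Hc by lra. rewrite Rmax_right in Hc by lra.
    assert (0 <= df c * (y - x)) by (apply Rmult_le_pos; [apply Hp; lra | lra]). lra.
Qed.

Lemma sqrt2pi_pos : 0 < sqrt (2 * PI).
Proof. apply sqrt_lt_R0. generalize PI_RGT_0. lra. Qed.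

Lemma phi_pos x : 0 < std_phi x.
Proof. unfold std_phi. apply Rdiv_lt_0_compat. apply exp_pos. apply sqrt2pi_pos. Qed.

Lemma phi_even x : std_phi (- x) = std_phi x.
Proof. unfold std_phi. replace ((-x)^2) with (x^2) by ring. reflexivity. Qed.

Lemma phi_deriv x : is_derive std_phi x (- x * std_phi x).
Proof.
  unfold std_phi. auto_derive.
  - generalize sqrt2pi_pos. lra.
  - replace (- (x * (x * 1)) * / 2) with (- x ^ 2 / 2) by field. field. generalize sqrt2pi_pos. lra.
Qed.

Lemma phi_cont x : continuous std_phi x.
Proof. apply (ex_derive_continuous (K:=R_AbsRing) (V:=R_NormedModule)). eexists. apply phi_deriv. Qed.

Lemma phi_ex a b : ex_RInt std_phi a b.
Proof. apply (ex_RInt_continuous (V:=R_CompleteNormedModule)). intros; apply phi_cont. Qed.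

Definition G x := RInt std_phi 0 x.

Lemma G_deriv x : is_derive G x (std_phi x).
Proof.
  apply (is_derive_RInt (V:=R_NormedModule) std_phi G 0).
  - apply filter_forall. intros b. apply (@RInt_correct R_CompleteNormedModule). apply phi_ex.
  - apply phi_cont.
Qed.

Lemma G_0 : G 0 = 0.
Proof. unfold G. apply (RInt_point (V:=R_CompleteNormedModule)). Qed.

Lemma G_incr x y : x < y -> G x < G y.
Proof.
  intros H. apply (incr_function G m_infty p_infty std_phi); simpl; auto.
  - intros; apply G_deriv.
  - intros; apply phi_pos.
Qed.

Lemma G_mono x y : x <= y -> G x <= G y.
Proof. intros [H|H]. left; now apply G_incr. subst; lra. Qed.

Lemma const_deriv0 (f : R -> R) : (forall t, is_derive f t 0) -> forall x, f x = f 0.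
Proof.
  intros Hd x. destruct (Rle_dec 0 x).
  - apply Rle_antisym.
    + assert (- f 0 <= - f x); [|lra].
      apply (mono_le (fun t => - f t) (fun _ => 0)); [lra| |intros; lra].
      intros t _. replace 0 with (- 0) by ring. apply (is_derive_opp (K:=R_AbsRing) (V:=R_NormedModule)). apply Hd.
    + apply (mono_le f (fun _ => 0)); [lra| |intros; lra]. intros; apply Hd.
  - apply Rle_antisym.
    + apply (mono_le f (fun _ => 0)); [lra| |intros; lra]. intros; apply Hd.
    + assert (- f x <= - f 0); [|lra].
      apply (mono_le (fun t => - f t) (fun _ => 0)); [lra| |intros; lra].
      intros t _. replace 0 with (- 0) by ring. apply (is_derive_opp (K:=R_AbsRing) (V:=R_NormedModule)). apply Hd.
Qed.

Lemma G_odd x : G (- x) = - G x.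
Proof.
  assert (E : G (-x) + G x = G (-0) + G 0).
  2:{ rewrite Ropp_0, G_0 in E. lra. }
  apply (const_deriv0 (fun t => G (-t) + G t)).
  intros s.
  replace 0 with (-1 * std_phi (-s) + std_phi s) by (rewrite phi_even; ring).
  apply (is_derive_plus (K:=R_AbsRing) (V:=R_NormedModule)).
  - apply (is_derive_comp G (fun t => -t) s (std_phi (-s)) (-1)). apply G_deriv.
    auto_derive; auto; ring.
  - apply G_deriv.
Qed.

Lemma exp_le a b : a <= b -> exp a <= exp b.
Proof. intros [H|H]. left; now apply exp_increasing. subst; lra. Qed.

Definition Kb := exp (/2) / sqrt (2 * PI).

Lemma G_bound x : G x <= Kb.
Proof.
  assert (Kp : 0 < Kb) by (unfold Kb; apply Rdiv_lt_0_compat; [apply exp_pos|apply sqrt2pi_pos]).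
  destruct (Rle_dec 0 x) as [Hx|Hx].
  - assert (0 - G 0 <= Kb * (1 - exp (- x)) - G x).
    { replace 0 with (Kb * (1 - exp (- 0))) at 1 by (rewrite Ropp_0, exp_0; ring).
      apply (mono_le (fun t => Kb * (1 - exp (- t)) - G t) (fun t => Kb * exp (-t) - std_phi t)); auto.
      - intros t _. apply (is_derive_minus (K:=R_AbsRing) (V:=R_NormedModule)).
        + auto_derive; auto; ring.
        + apply G_deriv.
      - intros t _. unfold Kb, std_phi.
        assert (exp (- t ^ 2 / 2) <= exp (/ 2) * exp (- t)).
        { rewrite <- exp_plus. apply exp_le. pose proof (pow2_ge_0 (t-1)). nra. }
        assert (0 < / sqrt (2 * PI)) by (apply Rinv_0_lt_compat, sqrt2pi_pos).
        unfold Rdiv. nra. }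
    rewrite G_0 in H. assert (0 < exp (- x)) by apply exp_pos. nra.
  - assert (G x < G 0) by (apply G_incr; lra). rewrite G_0 in H. lra.
Qed.

Lemma G_bounded : bound (fun y => exists x, y = G x).
Proof. exists Kb. intros y [x ->]. apply G_bound. Qed.

Lemma G_inhab : exists y, (fun y => exists x, y = G x) y.
Proof. exists (G 0). now exists 0. Qed.

Definition Zp : R := proj1_sig (completeness _ G_bounded G_inhab).

Lemma Zp_lub : is_lub (fun y => exists x, y = G x) Zp.
Proof. unfold Zp. destruct (completeness _ G_bounded G_inhab). auto. Qed.

Lemma G_le_Zp x : G x <= Zp.
Proof. destruct Zp_lub as [H _]. apply H. now exists x. Qed.

Lemma G_lim : Limp G Zp.
Proof.
  intros eps Heps.
  destruct (Classical_Prop.classic (exists x0, Zp - eps < G x0)) as [[x0 Hx0]|Hn].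
  - exists x0. intros x Hx. assert (G x0 <= G x) by (apply G_mono; lra).
    assert (G x <= Zp) by apply G_le_Zp. unfold Rabs. destruct Rcase_abs; lra.
  - exfalso. destruct Zp_lub as [_ H2]. assert (Zp <= Zp - eps); [|lra].
    apply H2. intros y [x ->]. apply Rnot_lt_le. intro; apply Hn; eauto.
Qed.

Lemma Zp_pos : 0 < Zp.
Proof. assert (G 0 < G 1) by (apply G_incr; lra). rewrite G_0 in H. generalize (G_le_Zp 1). lra. Qed.

Lemma Phi_eq x : std_Phi x = Zp + G x.
Proof.
  unfold std_Phi. apply (is_RInt_gen_unique (V:=R_CompleteNormedModule)).
  apply is_RInt_gen_minf.
  - intros; apply phi_ex.
  - intros eps Heps. destruct (G_lim eps Heps) as [M HM]. exists (- M).
    intros a Ha.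
    assert (E : RInt std_phi a x = G x - G a).
    { pose proof (RInt_Chasles (V:=R_CompleteNormedModule) std_phi 0 a x (phi_ex _ _) (phi_ex _ _)) as E2.
      unfold plus in E2; simpl in E2. unfold G. lra. }
    rewrite E. replace a with (- (- a)) by ring. rewrite G_odd.
    replace (G x - - G (- a) - (Zp + G x)) with (G (-a) - Zp) by ring. apply HM. lra.
Qed.

Definition kW (M b : R) := (1 - exp (- (1 + b * b) * (M * M) / 2)) / (1 + b * b).
Definition W (a M : R) := RInt (fun b => kW M b) 0 a.

Lemma one_b2_pos b : 0 < 1 + b * b.
Proof. nra. Qed.

Lemma kW_dM M b : is_derive (fun z => kW z b) M (M * exp (- (1 + b * b) * (M * M) / 2)).
Proof.
  unfold kW. auto_derive.
  - generalize (one_b2_pos b); lra.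
  - unfold Rdiv. field. generalize (one_b2_pos b); lra.
Qed.

Lemma kW_cont_b M b : continuous (fun t => kW M t) b.
Proof.
  apply (ex_derive_continuous (K:=R_AbsRing) (V:=R_NormedModule)).
  unfold kW. auto_derive. generalize (one_b2_pos b); lra.
Qed.

Lemma cont2d_D M t : continuity_2d_pt (fun u v => Derive (fun z => kW z v) u) M t.
Proof.
  apply (continuity_2d_pt_ext (fun u v => u * exp (- (1 + v * v) * (u * u) / 2))).
  { intros u v. symmetry. apply is_derive_unique. apply kW_dM. }
  apply continuity_2d_pt_mult. apply continuity_2d_pt_id1.
  apply (continuity_1d_2d_pt_comp exp (fun u v => - (1 + v * v) * (u * u) / 2)).
  { apply continuity_pt_filterlim. apply continuous_exp. }
  unfold Rdiv. apply continuity_2d_pt_mult; [|apply continuity_2d_pt_const].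
  apply continuity_2d_pt_mult.
  - apply continuity_2d_pt_opp. apply continuity_2d_pt_plus. apply continuity_2d_pt_const.
    apply continuity_2d_pt_mult; apply continuity_2d_pt_id2.
  - apply continuity_2d_pt_mult; apply continuity_2d_pt_id1.
Qed.

Lemma sqrt2pi_sq : sqrt (2 * PI) * sqrt (2 * PI) = 2 * PI.
Proof. apply sqrt_sqrt. generalize PI_RGT_0; lra. Qed.

Lemma W_deriv a M : is_derive (fun z => W a z) M (2 * PI * std_phi M * G (a * M)).
Proof.
  unfold W.
  assert (Hd := is_derive_RInt_param (fun z t => kW z t) 0 a M).
  simpl in Hd.
  replace (2 * PI * std_phi M * G (a * M)) with
     (RInt (fun t => Derive (fun u => kW u t) M) 0 a).
  - apply Hd.
    + apply filter_forall. intros x t _. eexists; apply kW_dM.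
    + intros t _. apply cont2d_D.
    + apply filter_forall. intros y. apply (ex_RInt_continuous (V:=R_CompleteNormedModule)).
      intros; apply kW_cont_b.
  - rewrite (RInt_ext _ (fun t => scal (2 * PI * std_phi M) (scal M (std_phi (M * t + 0))))).
    2:{ intros x _. erewrite is_derive_unique; [|apply kW_dM].
        unfold scal; simpl; unfold mult; simpl. unfold std_phi.
        replace (M * x + 0) with (M * x) by ring.
        replace (exp (- (1 + x * x) * (M * M) / 2)) with (exp (- M ^ 2 / 2) * exp (- (M * x) ^ 2 / 2)).
        2:{ rewrite <- exp_plus. f_equal. field. }
        pose proof sqrt2pi_pos. set (s := sqrt (2 * PI)) in *. replace (2 * PI) with (s * s) by (unfold s; apply sqrt2pi_sq). field. lra. }

    rewrite (RInt_scal (V:=R_CompleteNormedModule)).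
    2:{ apply (ex_RInt_comp_lin (V:=R_CompleteNormedModule)). apply phi_ex. }
    rewrite (RInt_comp_lin (V:=R_CompleteNormedModule)) by apply phi_ex.
    unfold G. replace (M * 0 + 0) with 0 by ring. replace (M * a + 0) with (a * M) by ring.
    reflexivity.
Qed.

Definition intA a u := (Zp - G (a * u)) * std_phi u.

Lemma exd_Ga a u : ex_derive (fun u => G (a * u)) u.
Proof.
  apply (ex_derive_comp (K:=R_AbsRing) (V:=R_NormedModule) G (fun u => a * u)).
  eexists; apply G_deriv. auto_derive; auto.
Qed.

Lemma intA_cont a u : continuous (intA a) u.
Proof.
  apply (ex_derive_continuous (K:=R_AbsRing) (V:=R_NormedModule)).
  unfold intA. apply ex_derive_mult.
  - apply (ex_derive_minus (K:=R_AbsRing) (V:=R_NormedModule) (fun _ => Zp) (fun u => G (a * u))).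
    apply ex_derive_const. apply exd_Ga.
  - eexists; apply phi_deriv.
Qed.

Lemma W_0 a : W a 0 = 0.
Proof.
  unfold W. rewrite (RInt_ext _ (fun _ => 0)).
  - rewrite (RInt_const (V:=R_CompleteNormedModule)). unfold scal; simpl; unfold mult; simpl. ring.
  - intros x _. change ((1 - exp (- (1 + x * x) * (0 * 0) / 2)) / (1 + x * x) = 0). replace (- (1 + x * x) * (0 * 0) / 2) with 0 by field. rewrite exp_0. unfold Rdiv. ring.
Qed.

Definition HA a z := Zp * G z - / (2 * PI) * W a z.

Lemma HA_deriv a M : is_derive (HA a) M (intA a M).
Proof.
  unfold HA. replace (intA a M) with (Zp * std_phi M - / (2 * PI) * (2 * PI * std_phi M * G (a * M))).
  - apply (is_derive_minus (K:=R_AbsRing) (V:=R_NormedModule)).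
    + apply (is_derive_scal G). apply G_deriv.
    + apply (is_derive_scal (fun z => W a z)). apply W_deriv.
  - unfold intA. field. generalize PI_RGT_0; lra.
Qed.

Lemma JA_eq a M : RInt (intA a) 0 M = HA a M.
Proof.
  apply is_RInt_unique.
  replace (HA a M) with (minus (HA a M) (HA a 0)).
  - apply (is_RInt_derive (V:=R_CompleteNormedModule)).
    + intros; apply HA_deriv.
    + intros; apply intA_cont.
  - unfold HA. rewrite W_0, G_0. unfold minus, plus, opp; simpl. ring.
Qed.

Lemma Limp_ext f g L : (forall x, f x = g x) -> Limp f L -> Limp g L.
Proof. intros H Hl eps He. destruct (Hl eps He) as [M HM]. exists M. intros; rewrite <- H; auto. Qed.

Lemma Limp_const c : Limp (fun _ => c) c.
Proof. intros eps He. exists 0. intros. rewrite Rminus_diag, Rabs_R0. auto. Qed.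

Lemma Limp_plus f g L1 L2 : Limp f L1 -> Limp g L2 -> Limp (fun x => f x + g x) (L1 + L2).
Proof.
  intros H1 H2 eps He. destruct (H1 (eps/2)) as [M1 HM1]; [lra|]. destruct (H2 (eps/2)) as [M2 HM2]; [lra|].
  exists (Rmax M1 M2). intros x Hx.
  assert (A1 := HM1 x ltac:(generalize (Rmax_l M1 M2); lra)).
  assert (A2 := HM2 x ltac:(generalize (Rmax_r M1 M2); lra)).
  replace (f x + g x - (L1 + L2)) with ((f x - L1) + (g x - L2)) by ring.
  eapply Rle_lt_trans. apply Rabs_triang. lra.
Qed.

Lemma Limp_scal f L c : Limp f L -> Limp (fun x => c * f x) (c * L).
Proof.
  intros H eps He. destruct (H (eps / (Rabs c + 1))) as [M HM].
  { apply Rdiv_lt_0_compat; auto. generalize (Rabs_pos c); lra. }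
  exists M. intros x Hx. replace (c * f x - c * L) with (c * (f x - L)) by ring.
  rewrite Rabs_mult. assert (A := HM x Hx).
  assert (Rabs c * Rabs (f x - L) <= Rabs c * (eps / (Rabs c + 1))).
  { apply Rmult_le_compat_l. apply Rabs_pos. lra. }
  assert (Rabs c * (eps / (Rabs c + 1)) < eps); [|lra].
  apply (Rmult_lt_reg_r (Rabs c + 1)). generalize (Rabs_pos c); lra.
  field_simplify; [|generalize (Rabs_pos c); lra]. nra.
Qed.

Lemma Limp_bmult f g K : Limp f 0 -> (forall x, Rabs (g x) <= K) -> Limp (fun x => f x * g x) 0.
Proof.
  intros H Hg eps He. assert (K0 : 0 <= K) by (eapply Rle_trans; [apply Rabs_pos|apply (Hg 0)]).
  destruct (H (eps / (K + 1))) as [M HM]. { apply Rdiv_lt_0_compat; lra. }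
  exists M. intros x Hx. rewrite Rminus_0_r, Rabs_mult. assert (A := HM x Hx). rewrite Rminus_0_r in A.
  assert (Rabs (f x) * Rabs (g x) <= (eps / (K + 1)) * K).
  { apply Rmult_le_compat; auto using Rabs_pos. lra. }
  assert ((eps / (K + 1)) * K < eps); [|lra].
  apply (Rmult_lt_reg_r (K + 1)). lra. field_simplify; lra.
Qed.

Lemma Limp_le f L M0 : Limp f L -> (forall x, M0 < x -> 0 <= f x) -> 0 <= L.
Proof.
  intros H Hp. apply Rnot_lt_le. intro HL. destruct (H (- L)) as [M HM]; [lra|].
  assert (A := HM (Rmax M M0 + 1) ltac:(generalize (Rmax_l M M0); lra)).
  assert (B := Hp (Rmax M M0 + 1) ltac:(generalize (Rmax_r M M0); lra)).
  revert A. unfold Rabs. destruct Rcase_abs; lra.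
Qed.

Lemma Limp_unique f L1 L2 : Limp f L1 -> Limp f L2 -> L1 = L2.
Proof.
  intros H1 H2. apply Rle_antisym.
  - assert (0 <= L2 - L1); [|lra].
    apply (Limp_le (fun x => f x + -1 * f x) (L2 - L1) 0); [|intros; lra].
    replace (L2 - L1) with (L2 + -1 * L1) by ring. apply Limp_plus; auto. apply Limp_scal; auto.
  - assert (0 <= L1 - L2); [|lra].
    apply (Limp_le (fun x => f x + -1 * f x) (L1 - L2) 0); [|intros; lra].
    replace (L1 - L2) with (L1 + -1 * L2) by ring. apply Limp_plus; auto. apply Limp_scal; auto.
Qed.

Lemma exp_neg_bound M : 0 < M -> exp (- (M * M) / 2) <= / M.
Proof.
  intros HM. replace (- (M * M) / 2) with (- (M * M / 2)) by field. rewrite exp_Ropp.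
  apply Rinv_le_contravar; auto. generalize (exp_ineq1_le (M * M / 2)). nra.
Qed.

Lemma Limp_inv : Limp (fun M => / M) 0.
Proof.
  intros eps He. exists (/ eps). intros x Hx.
  assert (0 < / eps) by (apply Rinv_0_lt_compat; auto).
  rewrite Rminus_0_r, Rabs_right. 2: { left; apply Rinv_0_lt_compat; lra. }
  replace eps with (/ / eps) by (field; lra). apply Rinv_lt_contravar; nra.
Qed.

Lemma Limp_squeeze f g L M0 : Limp g 0 -> (forall x, M0 < x -> Rabs (f x - L) <= g x) -> Limp f L.
Proof.
  intros H Hb eps He. destruct (H eps He) as [M HM]. exists (Rmax M M0). intros x Hx.
  assert (A := HM x ltac:(generalize (Rmax_l M M0); lra)).
  assert (B := Hb x ltac:(generalize (Rmax_r M M0); lra)).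
  rewrite Rminus_0_r in A. revert A. unfold Rabs at 1. destruct Rcase_abs; lra.
Qed.

Lemma atan_RInt a : is_RInt (fun b => / (1 + b * b)) 0 a (atan a).
Proof.
  replace (atan a) with (minus (atan a) (atan 0)) by (rewrite atan_0; unfold minus, plus, opp; simpl; ring).
  apply (is_RInt_derive (V:=R_CompleteNormedModule)).
  - intros x _. apply is_derive_atan.
  - intros x _. apply (ex_derive_continuous (K:=R_AbsRing) (V:=R_NormedModule)).
    auto_derive. generalize (one_b2_pos x); lra.
Qed.

Lemma atan_RInt2 a c : is_RInt (fun b => / (1 + b * b) - c) 0 a (atan a - c * a).
Proof.
  replace (atan a - c * a) with (minus (atan a - c * a) (atan 0 - c * 0)) by (rewrite atan_0; unfold minus, plus, opp; simpl; ring).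
  apply (is_RInt_derive (V:=R_CompleteNormedModule) (fun b => atan b - c * b)).
  - intros x _. apply (is_derive_minus (K:=R_AbsRing) (V:=R_NormedModule)). apply is_derive_atan.
    auto_derive; auto; ring.
  - intros x _. apply (ex_derive_continuous (K:=R_AbsRing) (V:=R_NormedModule)).
    auto_derive. generalize (one_b2_pos x); lra.
Qed.

Lemma W_lim a : 0 <= a -> Limp (W a) (atan a).
Proof.
  intros Ha. apply (Limp_squeeze _ (fun M => a * / M) _ 0).
  { replace 0 with (a * 0) by ring. apply Limp_scal, Limp_inv. }
  intros M HM.
  assert (Hc : exp (- (M * M) / 2) <= / M) by (apply exp_neg_bound; auto).
  assert (E0 : exp (- (M * M) / 2) > 0) by apply exp_pos.
  assert (exk : ex_RInt (fun b => kW M b) 0 a).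
  { apply (ex_RInt_continuous (V:=R_CompleteNormedModule)). intros; apply kW_cont_b. }
  assert (U : W a M <= atan a).
  { rewrite <- (is_RInt_unique _ _ _ _ (atan_RInt a)). unfold W. apply RInt_le; auto.
    eexists; apply atan_RInt. intros x _. unfold kW. unfold Rdiv.
    assert (0 < / (1 + x * x)) by (apply Rinv_0_lt_compat, one_b2_pos).
    assert (0 < exp (- (1 + x * x) * (M * M) / 2)) by apply exp_pos. nra. }
  assert (L : atan a - exp (- (M * M) / 2) * a <= W a M).
  { rewrite <- (is_RInt_unique _ _ _ _ (atan_RInt2 a (exp (- (M * M) / 2)))). unfold W. apply RInt_le; auto.
    eexists; apply atan_RInt2. intros x _. unfold kW. unfold Rdiv.
    assert (0 < / (1 + x * x)) by (apply Rinv_0_lt_compat, one_b2_pos).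
    assert (/ (1 + x * x) <= 1).
    { rewrite <- Rinv_1. apply Rinv_le_contravar; [lra|]. nra. }
    assert (exp (- (1 + x * x) * (M * M) / 2) <= exp (- (M * M) / 2)).
    { apply exp_le. assert (0 <= x * x * (M * M)) by (apply Rmult_le_pos; nra). lra. }
    assert (0 < exp (- (1 + x * x) * (M * M) / 2)) by apply exp_pos. nra. }
  rewrite Rabs_left1 by lra.
  assert (exp (- (M * M) / 2) * a <= / M * a) by (apply Rmult_le_compat_r; auto). lra.
Qed.

Lemma intA_ex a x y : ex_RInt (intA a) x y.
Proof. apply (ex_RInt_continuous (V:=R_CompleteNormedModule)). intros; apply intA_cont. Qed.

Lemma JA_lim a : 0 <= a -> Limp (fun M => RInt (intA a) 0 M) (Zp * Zp - atan a / (2 * PI)).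
Proof.
  intros Ha. apply (Limp_ext (HA a)). { intros; symmetry; apply JA_eq. }
  unfold HA. replace (Zp * Zp - atan a / (2 * PI)) with (Zp * Zp + - / (2 * PI) * atan a) by (field; generalize PI_RGT_0; lra).
  apply (Limp_ext (fun z => Zp * G z + - / (2 * PI) * W a z)). { intros; ring. }
  apply Limp_plus; apply Limp_scal. apply G_lim. now apply W_lim.
Qed.

Lemma intA_nonneg a u : 0 <= intA a u.
Proof. unfold intA. apply Rmult_le_pos. generalize (G_le_Zp (a * u)); lra. left; apply phi_pos. Qed.

Lemma atan_le_id y : 0 <= y -> atan y <= y.
Proof.
  intros Hy. assert (0 - atan 0 <= y - atan y); [|rewrite atan_0 in H; lra].
  apply (mono_le (fun t => t - atan t) (fun t => 1 - / (1 + t²))); auto.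
  - intros t _. apply (is_derive_minus (K:=R_AbsRing) (V:=R_NormedModule)).
    apply (is_derive_id (K:=R_AbsRing)). apply is_derive_atan.
  - intros t _. assert (/ (1 + t²) <= 1); [|lra]. rewrite <- Rinv_1. apply Rinv_le_contravar; [lra|].
    unfold Rsqr. nra.
Qed.

Lemma Zp_sq_ge : 1 / 4 <= Zp * Zp.
Proof.
  assert (Hpi := PI_RGT_0).
  assert (H : forall a, 0 < a -> 1 / 4 - / (2 * PI * a) <= Zp * Zp).
  { intros a Ha. assert (0 <= Zp * Zp - atan a / (2 * PI)).
    { apply (Limp_le _ _ 0 (JA_lim a ltac:(lra))). intros x Hx. apply RInt_ge_0. lra. apply intA_ex.
      intros; apply intA_nonneg. }
    assert (atan (/ a) <= / a) by (apply atan_le_id; left; apply Rinv_0_lt_compat; auto).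
    rewrite atan_inv in H0 by auto.
    assert (1 / 4 - / (2 * PI * a) = (PI / 2 - / a) / (2 * PI)) by (field; lra).
    rewrite H1. assert ((PI / 2 - / a) / (2 * PI) <= atan a / (2 * PI)); [|lra].
    apply Rmult_le_compat_r. left; apply Rinv_0_lt_compat; lra. lra. }
  apply Rnot_lt_le. intro Hc.
  set (d := 1 / 4 - Zp * Zp). assert (Hd : 0 < d) by (unfold d; lra).
  assert (A := H (2 / (2 * PI * d)) ltac:(apply Rdiv_lt_0_compat; nra)).
  replace (/ (2 * PI * (2 / (2 * PI * d)))) with (d / 2) in A by (field; lra).
  unfold d in A. lra.
Qed.

Lemma phi_le x : std_phi x <= / sqrt (2 * PI).
Proof.
  unfold std_phi. unfold Rdiv. rewrite <- (Rmult_1_l (/ sqrt (2 * PI))) at 2.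
  apply Rmult_le_compat_r. left; apply Rinv_0_lt_compat, sqrt2pi_pos.
  rewrite <- exp_0. apply exp_le. pose proof (pow2_ge_0 x). lra.
Qed.

Lemma G_le_lin d : 0 <= d -> G d <= d / sqrt (2 * PI).
Proof.
  intros Hd. unfold G.
  replace (d / sqrt (2 * PI)) with (RInt (fun _ => / sqrt (2 * PI)) 0 d).
  - apply RInt_le; auto. apply phi_ex. apply (ex_RInt_const (V:=R_CompleteNormedModule)).
    intros; apply phi_le.
  - rewrite (RInt_const (V:=R_CompleteNormedModule)). unfold scal; simpl; unfold mult; simpl.
    unfold Rdiv; ring.
Qed.

Lemma JA_upper a d M : 0 <= a -> 0 <= d -> d <= M ->
  RInt (intA a) 0 M <= Zp * G d + (Zp - G (a * d)) * Zp.
Proof.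
  intros Ha Hd HM.
  pose proof (RInt_Chasles (V:=R_CompleteNormedModule) (intA a) 0 d M (intA_ex _ _ _) (intA_ex _ _ _)) as E.
  unfold plus in E; simpl in E. rewrite <- E.
  assert (I1 : RInt (intA a) 0 d <= Zp * G d).
  { unfold G. rewrite <- (RInt_scal (V:=R_CompleteNormedModule)) by apply phi_ex.
    apply RInt_le; auto. apply intA_ex. apply (ex_RInt_scal (V:=R_CompleteNormedModule)), phi_ex.
    intros x Hx. unfold intA, scal; simpl; unfold mult; simpl.
    apply Rmult_le_compat_r. left; apply phi_pos.
    assert (0 <= G (a * x)); [|lra]. rewrite <- G_0. apply G_mono. nra. }
  assert (I2 : RInt (intA a) d M <= (Zp - G (a * d)) * (G M - G d)).
  { replace (G M - G d) with (RInt std_phi d M).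
    2:{ pose proof (RInt_Chasles (V:=R_CompleteNormedModule) std_phi 0 d M (phi_ex _ _) (phi_ex _ _)) as E2.
        unfold plus in E2; simpl in E2. unfold G. lra. }
    rewrite <- (RInt_scal (V:=R_CompleteNormedModule)) by apply phi_ex.
    apply RInt_le; auto. apply intA_ex. apply (ex_RInt_scal (V:=R_CompleteNormedModule)), phi_ex.
    intros x Hx. unfold intA, scal; simpl; unfold mult; simpl.
    apply Rmult_le_compat_r. left; apply phi_pos.
    assert (G (a * d) <= G (a * x)); [|lra]. apply G_mono. nra. }
  assert (0 <= G d) by (rewrite <- G_0; apply G_mono; auto).
  assert (G M <= Zp) by apply G_le_Zp.
  assert (G (a * d) <= Zp) by apply G_le_Zp.
  assert ((Zp - G (a * d)) * (G M - G d) <= (Zp - G (a * d)) * Zp) by (apply Rmult_le_compat_l; lra).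
  lra.
Qed.

Lemma Zp_sq_le : Zp * Zp <= 1 / 4.
Proof.
  assert (Hpi := PI_RGT_0). assert (Zpos := Zp_pos). assert (Hs := sqrt2pi_pos).
  assert (H : forall a d, 0 < a -> 0 < d -> Zp * Zp - 1 / 4 <= Zp * (d / sqrt (2 * PI)) + (Zp - G (a * d)) * Zp).
  { intros a d Ha Hd.
    assert (0 <= Zp * G d + (Zp - G (a * d)) * Zp - (Zp * Zp - atan a / (2 * PI))).
    { apply (Limp_le (fun M => Zp * G d + (Zp - G (a * d)) * Zp + -1 * RInt (intA a) 0 M) _ d).
      - replace (Zp * G d + (Zp - G (a * d)) * Zp - (Zp * Zp - atan a / (2 * PI))) with
          (Zp * G d + (Zp - G (a * d)) * Zp + -1 * (Zp * Zp - atan a / (2 * PI))) by ring.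
        apply Limp_plus. apply Limp_const. apply Limp_scal. apply JA_lim. lra.
      - intros x Hx. generalize (JA_upper a d x ltac:(lra) ltac:(lra) ltac:(lra)). lra. }
    assert (atan a <= PI / 2) by (generalize (atan_bound a); lra).
    assert (atan a / (2 * PI) <= 1 / 4).
    { replace (1 / 4) with ((PI / 2) / (2 * PI)) by (field; lra). apply Rmult_le_compat_r; [|lra].
      left; apply Rinv_0_lt_compat; lra. }
    assert (Zp * G d <= Zp * (d / sqrt (2 * PI))) by (apply Rmult_le_compat_l; [lra|apply G_le_lin; lra]).
    lra. }
  apply Rnot_lt_le. intro Hc. set (e := Zp * Zp - 1 / 4). assert (He : 0 < e) by (unfold e; lra).
  set (d := e * sqrt (2 * PI) / (2 * Zp)).
  assert (Hd : 0 < d) by (unfold d; apply Rdiv_lt_0_compat; nra).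
  destruct (G_lim (e / (2 * Zp))) as [Y HY]. { apply Rdiv_lt_0_compat; lra. }
  set (a := (Rabs Y + 1) / d).
  assert (Ha : 0 < a) by (unfold a; apply Rdiv_lt_0_compat; [generalize (Rabs_pos Y)|]; lra).
  assert (Had : a * d = Rabs Y + 1) by (unfold a; field; lra).
  assert (A := H a d Ha Hd). rewrite Had in A.
  assert (B := HY (Rabs Y + 1) ltac:(generalize (Rle_abs Y); lra)).
  assert (C : Zp - G (Rabs Y + 1) < e / (2 * Zp)) by (revert B; unfold Rabs at 1; destruct Rcase_abs; lra).
  assert (Zp * (d / sqrt (2 * PI)) = e / 2) by (unfold d; field; lra).
  assert ((Zp - G (Rabs Y + 1)) * Zp < e / 2).
  { apply (Rmult_lt_compat_r Zp) in C; auto. replace (e / (2 * Zp) * Zp) with (e / 2) in C by (field; lra). lra. }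
  unfold e in *. lra.
Qed.

Lemma Zp_half : Zp = 1 / 2.
Proof.
  pose proof Zp_sq_ge. pose proof Zp_sq_le. pose proof Zp_pos.
  assert ((Zp - 1 / 2) * (Zp + 1 / 2) = 0) by nra.
  apply Rmult_integral in H2. destruct H2; lra.
Qed.

Definition intB a u := u * u * (Zp - G (a * u)) * std_phi u.
Definition Qf a M := (1 - exp (- (1 + a * a) * (M * M) / 2)) / (2 * PI * (1 + a * a)).
Definition HB a M := HA a M - M * std_phi M * (Zp - G (a * M)) - a * Qf a M.

Lemma Qf_deriv a M : is_derive (Qf a) M (M * std_phi M * std_phi (a * M)).
Proof.
  assert (Hpi := PI_RGT_0). assert (Ha := one_b2_pos a).
  unfold Qf. auto_derive. { nra. }
  unfold std_phi.
  replace (exp (- (1 + a * a) * (M * M) * / 2)) with (exp (- M ^ 2 / 2) * exp (- (a * M) ^ 2 / 2)).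
  2:{ rewrite <- exp_plus. f_equal. field. }
  pose proof sqrt2pi_pos. set (s := sqrt (2 * PI)) in *. replace (2 * PI) with (s * s) by (unfold s; apply sqrt2pi_sq).
  field. split; lra.
Qed.

Lemma Ga_deriv a M : is_derive (fun u => G (a * u)) M (a * std_phi (a * M)).
Proof.
  apply (is_derive_comp G (fun u => a * u) M (std_phi (a * M)) a). apply G_deriv.
  auto_derive; auto; ring.
Qed.

Lemma HB_deriv a M : is_derive (HB a) M (intB a M).
Proof.
  unfold HB.
  eapply is_derive_ext_loc. { apply filter_forall. intros x. reflexivity. }
  assert (D1 : is_derive (fun z => z * std_phi z * (Zp - G (a * z))) M
     ((1 * std_phi M + M * (- M * std_phi M)) * (Zp - G (a * M)) + M * std_phi M * (0 - a * std_phi (a * M)))).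
  { apply (is_derive_mult (K:=R_AbsRing) (fun z => z * std_phi z) (fun z => Zp - G (a * z))).
    - apply (is_derive_mult (K:=R_AbsRing) (fun z => z) std_phi). apply (is_derive_id (K:=R_AbsRing)).
      apply phi_deriv. intros; apply Rmult_comm.
    - apply (is_derive_minus (K:=R_AbsRing) (V:=R_NormedModule) (fun _ => Zp) (fun z => G (a * z))).
      auto_derive; auto. apply Ga_deriv.
    - intros; apply Rmult_comm. }
  replace (intB a M) with (minus (minus (intA a M)
      ((1 * std_phi M + M * (- M * std_phi M)) * (Zp - G (a * M)) + M * std_phi M * (0 - a * std_phi (a * M))))
      (a * (M * std_phi M * std_phi (a * M)))).
  - apply (is_derive_minus (K:=R_AbsRing) (V:=R_NormedModule)).
    + apply (is_derive_minus (K:=R_AbsRing) (V:=R_NormedModule)). apply HA_deriv. apply D1.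
    + apply (is_derive_scal (Qf a)). apply Qf_deriv.
  - unfold intA, intB, minus, plus, opp; simpl. ring.
Qed.

Lemma JB_eq a M : RInt (intB a) 0 M = HB a M.
Proof.
  apply is_RInt_unique.
  replace (HB a M) with (minus (HB a M) (HB a 0)).
  - apply (is_RInt_derive (V:=R_CompleteNormedModule)).
    + intros; apply HB_deriv.
    + intros x _. apply (ex_derive_continuous (K:=R_AbsRing) (V:=R_NormedModule)).
      unfold intB. apply ex_derive_mult. apply ex_derive_mult. apply ex_derive_mult.
      apply (ex_derive_id (K:=R_AbsRing)). apply (ex_derive_id (K:=R_AbsRing)).
      apply (ex_derive_minus (K:=R_AbsRing) (V:=R_NormedModule) (fun _ => Zp) (fun u => G (a * u))).
      apply ex_derive_const. apply exd_Ga. eexists; apply phi_deriv.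
  - unfold HB, HA, Qf. rewrite W_0, G_0. unfold minus, plus, opp; simpl.
    replace (- (1 + a * a) * (0 * 0) / 2) with 0 by field. rewrite exp_0. field.
    generalize PI_RGT_0 (one_b2_pos a). nra.
Qed.

Lemma exp_neg_bound2 M : 0 < M -> exp (- (M * M) / 2) <= 2 / (M * M).
Proof.
  intros HM. replace (- (M * M) / 2) with (- (M * M / 2)) by field. rewrite exp_Ropp.
  replace (2 / (M * M)) with (/ (M * M / 2)) by (field; lra).
  apply Rinv_le_contravar. nra. generalize (exp_ineq1_le (M * M / 2)). nra.
Qed.

Lemma Limp_Mphi : Limp (fun M => M * std_phi M) 0.
Proof.
  apply (Limp_squeeze _ (fun M => (2 / sqrt (2 * PI)) * / M) _ 0).
  { replace 0 with ((2 / sqrt (2 * PI)) * 0) by ring. apply Limp_scal, Limp_inv. }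
  intros M HM. rewrite Rminus_0_r. pose proof (phi_pos M). rewrite Rabs_right by nra.
  unfold std_phi. replace (- M ^ 2 / 2) with (- (M * M) / 2) by field.
  assert (E := exp_neg_bound2 M HM). pose proof sqrt2pi_pos.
  unfold Rdiv. rewrite <- Rmult_assoc.
  replace (2 * / sqrt (2 * PI) * / M) with ((M * (2 / (M * M))) * / sqrt (2 * PI)) by (field; lra).
  apply Rmult_le_compat_r. left; apply Rinv_0_lt_compat; lra.
  apply Rmult_le_compat_l; lra.
Qed.

Lemma G_ge x : - Zp <= G x.
Proof. replace x with (- - x) by ring. rewrite G_odd. generalize (G_le_Zp (- x)). lra. Qed.

Lemma Qf_lim a : Limp (Qf a) (/ (2 * PI * (1 + a * a))).
Proof.
  assert (Hpi := PI_RGT_0). assert (Ha := one_b2_pos a).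
  set (c := / (2 * PI * (1 + a * a))). assert (Hc : 0 < c) by (unfold c; apply Rinv_0_lt_compat; nra).
  apply (Limp_squeeze _ (fun M => c * / M) _ 0).
  { replace 0 with (c * 0) by ring. apply Limp_scal, Limp_inv. }
  intros M HM. unfold Qf.
  replace ((1 - exp (- (1 + a * a) * (M * M) / 2)) / (2 * PI * (1 + a * a)) - c)
    with (- (c * exp (- (1 + a * a) * (M * M) / 2))) by (unfold c; field; nra).
  rewrite Rabs_Ropp. pose proof (exp_pos (- (1 + a * a) * (M * M) / 2)).
  rewrite Rabs_right by nra. apply Rmult_le_compat_l; [lra|].
  eapply Rle_trans; [|apply exp_neg_bound; lra]. apply exp_le.
  assert (0 <= a * a * (M * M)) by (apply Rmult_le_pos; nra). lra.
Qed.

Lemma JB_lim a : 0 <= a -> Limp (fun M => RInt (intB a) 0 M)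
   (Zp * Zp - atan a / (2 * PI) + -1 * 0 + - a * / (2 * PI * (1 + a * a))).
Proof.
  intros Ha. apply (Limp_ext (HB a)). { intros; symmetry; apply JB_eq. }
  apply (Limp_ext (fun M => HA a M + -1 * (M * std_phi M * (Zp - G (a * M))) + - a * Qf a M)).
  { intros; unfold HB; ring. }
  apply Limp_plus; [apply Limp_plus|apply Limp_scal, Qf_lim].
  - apply (Limp_ext (fun M => RInt (intA a) 0 M)). { intros; apply JA_eq. } apply JA_lim; auto.
  - apply Limp_scal. apply (Limp_bmult _ _ (2 * Zp)). apply Limp_Mphi.
    intros x. generalize (G_le_Zp (a * x)) (G_ge (a * x)) Zp_pos. intros. unfold Rabs; destruct Rcase_abs; lra.
Qed.

Lemma Phi_lin l q u : std_Phi (- (u * l * q) / 2) = Zp - G ((l * q / 2) * u).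
Proof.
  rewrite Phi_eq. replace (- (u * l * q) / 2) with (- ((l * q / 2) * u)) by field. rewrite G_odd. ring.
Qed.

Lemma alpha_val c I l : 0 <= l * sqrt (c * I) ->
  alpha_acc c I l = 1 - 2 / PI * atan (l * sqrt (c * I) / 2).
Proof.
  intros Hs. set (a := l * sqrt (c * I) / 2). assert (Ha : 0 <= a) by (unfold a; lra).
  unfold alpha_acc.
  rewrite (is_RInt_gen_unique (V:=R_CompleteNormedModule) _ (Zp * Zp - atan a / (2 * PI))).
  - rewrite Zp_half. field. apply PI_neq0.
  - apply is_RInt_gen_pinf.
    + intros b _. apply (ex_RInt_ext (intA a)). intros x _. unfold intA. rewrite Phi_lin. reflexivity.
      apply intA_ex.
    + apply (Limp_ext (fun M => RInt (intA a) 0 M)).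
      { intros M. apply RInt_ext. intros x _. unfold intA. rewrite Phi_lin. reflexivity. }
      apply JA_lim; auto.
Qed.

Definition Tf a := 1 / 4 - atan a / (2 * PI) - a / (2 * PI * (1 + a * a)).

Lemma gc_val c I l : 0 <= l -> 0 < c * I ->
  g_c c I l = 16 / I * (l * sqrt (c * I) / 2) ^ 2 * Tf (l * sqrt (c * I) / 2).
Proof.
  intros Hl HcI. assert (Hq := sqrt_lt_R0 _ HcI).
  set (a := l * sqrt (c * I) / 2). assert (Ha : 0 <= a) by (unfold a; nra).
  unfold g_c.
  rewrite (is_RInt_gen_unique (V:=R_CompleteNormedModule) _ (Zp * Zp - atan a / (2 * PI) + -1 * 0 + - a * / (2 * PI * (1 + a * a)))).
  - rewrite Zp_half.
    assert (sqrt (c * I) * sqrt (c * I) = c * I) by (apply sqrt_sqrt; lra).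
    assert (I <> 0) by (intro; subst; lra).
    replace (16 / I * a ^ 2) with (4 * c * l ^ 2).
    2:{ unfold a. field_simplify; auto. replace (sqrt (c * I) ^ 2) with (c * I) by (simpl; rewrite Rmult_1_r; lra). field. auto. }
    unfold Tf. field. split. generalize (one_b2_pos a); lra. apply PI_neq0.
  - apply is_RInt_gen_pinf.
    + intros b _. apply (ex_RInt_ext (intB a)). intros x _. unfold intB. rewrite Phi_lin. fold a. simpl. ring.
      apply (ex_RInt_continuous (V:=R_CompleteNormedModule)). intros.
      apply (ex_derive_continuous (K:=R_AbsRing) (V:=R_NormedModule)).
      unfold intB. apply ex_derive_mult. apply ex_derive_mult. apply ex_derive_mult.
      apply (ex_derive_id (K:=R_AbsRing)). apply (ex_derive_id (K:=R_AbsRing)).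
      apply (ex_derive_minus (K:=R_AbsRing) (V:=R_NormedModule) (fun _ => Zp) (fun u => G (a * u))).
      apply ex_derive_const. apply exd_Ga. eexists; apply phi_deriv.
    + apply (Limp_ext (fun M => RInt (intB a) 0 M)).
      { intros M. apply RInt_ext. intros x _. unfold intB. rewrite Phi_lin. fold a. simpl. ring. }
      apply JB_lim; auto.
Qed.
Lemma atan_up9 y : 0 <= y -> atan y <= y - y^3/3 + y^5/5 - y^7/7 + y^9/9.
Proof.
  intros Hy. assert (0 - atan 0 <= (y - y^3/3 + y^5/5 - y^7/7 + y^9/9) - atan y); [|rewrite atan_0 in H; lra].
  replace 0 with (0 - 0^3/3 + 0^5/5 - 0^7/7 + 0^9/9) at 1 by field.
  apply (mono_le (fun t => (t - t^3/3 + t^5/5 - t^7/7 + t^9/9) - atan t) (fun t => t^10 / (1 + t²))); auto.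
  - intros t _. replace (t^10 / (1 + t²)) with ((1 - t^2 + t^4 - t^6 + t^8) - / (1 + t²)).
    2:{ unfold Rsqr. field. nra. }
    apply (is_derive_minus (K:=R_AbsRing) (V:=R_NormedModule)). auto_derive; auto; field.
    apply is_derive_atan.
  - intros t _. apply Rdiv_le_0_compat. replace (t^10) with ((t^5)^2) by ring. apply pow2_ge_0.
    unfold Rsqr; nra.
Qed.

Lemma atan_up5 y : 0 <= y -> atan y <= y - y^3/3 + y^5/5.
Proof.
  intros Hy. assert (0 - atan 0 <= (y - y^3/3 + y^5/5) - atan y); [|rewrite atan_0 in H; lra].
  replace 0 with (0 - 0^3/3 + 0^5/5) at 1 by field.
  apply (mono_le (fun t => (t - t^3/3 + t^5/5) - atan t) (fun t => t^6 / (1 + t²))); auto.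
  - intros t _. replace (t^6 / (1 + t²)) with ((1 - t^2 + t^4) - / (1 + t²)).
    2:{ unfold Rsqr. field. nra. }
    apply (is_derive_minus (K:=R_AbsRing) (V:=R_NormedModule)). auto_derive; auto; field.
    apply is_derive_atan.
  - intros t _. apply Rdiv_le_0_compat. replace (t^6) with ((t^3)^2) by ring. apply pow2_ge_0.
    unfold Rsqr; nra.
Qed.

Lemma atan_lo7 y : 0 <= y -> y - y^3/3 + y^5/5 - y^7/7 <= atan y.
Proof.
  intros Hy. assert (0 - 0 <= atan y - (y - y^3/3 + y^5/5 - y^7/7)); [|lra].
  replace (0 - 0) with (atan 0 - (0 - 0^3/3 + 0^5/5 - 0^7/7)) by (rewrite atan_0; field).
  apply (mono_le (fun t => atan t - (t - t^3/3 + t^5/5 - t^7/7)) (fun t => t^8 / (1 + t²))); auto.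
  - intros t _. replace (t^8 / (1 + t²)) with (/ (1 + t²) - (1 - t^2 + t^4 - t^6)).
    2:{ unfold Rsqr. field. nra. }
    apply (is_derive_minus (K:=R_AbsRing) (V:=R_NormedModule)). apply is_derive_atan.
    auto_derive; auto; field.
  - intros t _. apply Rdiv_le_0_compat. replace (t^8) with ((t^4)^2) by ring. apply pow2_ge_0.
    unfold Rsqr; nra.
Qed.

Lemma atan_lo3 y : 0 <= y -> y - y^3/3 <= atan y.
Proof.
  intros Hy. assert (0 - 0 <= atan y - (y - y^3/3)); [|lra].
  replace (0 - 0) with (atan 0 - (0 - 0^3/3)) by (rewrite atan_0; field).
  apply (mono_le (fun t => atan t - (t - t^3/3)) (fun t => t^4 / (1 + t²))); auto.
  - intros t _. replace (t^4 / (1 + t²)) with (/ (1 + t²) - (1 - t^2)).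
    2:{ unfold Rsqr. field. nra. }
    apply (is_derive_minus (K:=R_AbsRing) (V:=R_NormedModule)). apply is_derive_atan.
    auto_derive; auto; field.
  - intros t _. apply Rdiv_le_0_compat. replace (t^4) with ((t^2)^2) by ring. apply pow2_ge_0.
    unfold Rsqr; nra.
Qed.

Lemma PI_bounds : 3141591 / 1000000 < PI < 3141593 / 1000000.
Proof.
  assert (E := Machin_4_5_239).
  assert (A1 := atan_up9 (1/5) ltac:(lra)). assert (A2 := atan_lo7 (1/5) ltac:(lra)).
  assert (B1 := atan_lo3 (1/239) ltac:(lra)).
  assert (B2 := atan_up5 (1/239) ltac:(lra)).
  replace (/ 5) with (1/5) in E by field. replace (/ 239) with (1/239) in E by field.
  split; lra.
Qed.

Lemma atan_shift p : 0 < p -> atan p = PI / 4 + atan ((p - 1) / (p + 1)).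
Proof.
  intros Hp. rewrite <- atan_1.
  assert (E := atan_sub_correct p 1). unfold atan_sub in E.
  replace (1 + p * 1) with (p + 1) in E by ring. apply E.
  - lra.
  - rewrite atan_1. assert (atan 0 < atan p) by (apply atan_increasing; auto). rewrite atan_0 in H.
    generalize (atan_bound p) PI_RGT_0. lra.
  - generalize (atan_bound ((p - 1) / (p + 1))). lra.
Qed.

Definition kf a := PI / 2 - atan a - a / (1 + a * a) - a / ((1 + a * a) * (1 + a * a)).

Lemma kf_shift p : 0 < p -> kf p = PI / 4 - atan ((p - 1) / (p + 1)) - p / (1 + p * p) - p / ((1 + p * p) * (1 + p * p)).
Proof. intros Hp. unfold kf. rewrite (atan_shift p Hp). field. nra. Qed.

Lemma kf_p1 : 0 < kf (121275 / 100000).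
Proof.
  rewrite kf_shift by lra. assert (P := PI_bounds).
  set (z := (121275 / 100000 - 1) / (121275 / 100000 + 1)).
  assert (Hz : z = 21275 / 221275) by (unfold z; field).
  assert (A := atan_up5 z ltac:(rewrite Hz; lra)). rewrite Hz in A |- *. lra.
Qed.

Lemma kf_p2 : kf (121325 / 100000) < 0.
Proof.
  rewrite kf_shift by lra. assert (P := PI_bounds).
  set (z := (121325 / 100000 - 1) / (121325 / 100000 + 1)).
  assert (Hz : z = 21325 / 221325) by (unfold z; field).
  assert (A := atan_lo7 z ltac:(rewrite Hz; lra)). rewrite Hz in A |- *. lra.
Qed.

Lemma kf_large a : 17 / 10 <= a -> kf a < 0.
Proof.
  intros Ha. set (y := / a). assert (Hy : 0 < y) by (unfold y; apply Rinv_0_lt_compat; lra).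
  assert (Hy2 : y <= 10 / 17).
  { unfold y. replace (10 / 17) with (/ (17 / 10)) by field. apply Rinv_le_contravar; lra. }
  assert (Ea : a = / y) by (unfold y; field; lra).
  unfold kf. rewrite <- atan_inv by lra. fold y.
  assert (A := atan_up5 y ltac:(lra)).
  assert (E1 : a / (1 + a * a) = y / (1 + y * y)) by (rewrite Ea; field; split; nra).
  assert (E2 : a / ((1 + a * a) * (1 + a * a)) = y * y * y / ((1 + y * y) * (1 + y * y))) by (rewrite Ea; field; split; nra).
  rewrite E1, E2.
  assert (y - y ^ 3 / 3 + y ^ 5 / 5 < y / (1 + y * y) + y * y * y / ((1 + y * y) * (1 + y * y))); [|lra].
  assert (Hp : 0 < 1 + y * y) by nra.
  set (z := y * y). assert (Hz : 0 < z) by (unfold z; nra). assert (Hz2 : z <= 100 / 289) by (unfold z; nra).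
  assert (Q : -1/3 + 8 * z / 15 + z * z / 15 + z * z * z / 5 < 0).
  { assert (z * z <= 100/289 * z) by nra. assert (z * z * z <= 100/289 * (100/289) * z) by nra. lra. }
  assert (Poly : (y - y ^ 3 / 3 + y ^ 5 / 5) * ((1 + z) * (1 + z)) < y * (1 + z) + y * z).
  { assert (D : (y - y ^ 3 / 3 + y ^ 5 / 5) * ((1 + z) * (1 + z)) - (y * (1 + z) + y * z)
      = y * z * (-1/3 + 8 * z / 15 + z * z / 15 + z * z * z / 5)) by (unfold z; field).
    assert (0 < y * z) by nra.
    assert (y * z * (-1/3 + 8 * z / 15 + z * z / 15 + z * z * z / 5) < 0).
    { assert (0 < y * z * (- (-1/3 + 8 * z / 15 + z * z / 15 + z * z * z / 5))) by (apply Rmult_lt_0_compat; lra). lra. }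
    lra. }
  replace (y / (1 + y * y) + y * y * y / ((1 + y * y) * (1 + y * y)))
     with ((y * (1 + z) + y * z) / ((1 + z) * (1 + z))) by (unfold z; field; lra).
  fold z in Hp. apply (Rmult_lt_reg_r ((1 + z) * (1 + z))). nra.
  replace ((y / (1 + z) + z * y / ((1 + z) * (1 + z))) * ((1 + z) * (1 + z))) with (y * (1 + z) + y * z) by (field; lra). lra.
Qed.

Lemma kf_deriv a : is_derive kf a (- (3 - a * a) / ((1 + a * a) * (1 + a * a) * (1 + a * a))).
Proof.
  assert (Ha := one_b2_pos a). unfold kf. auto_derive.
  - repeat split; nra.
  - unfold Rsqr. field. nra.
Qed.

Lemma kf_decr x y : 0 <= x -> x < y -> y <= 17 / 10 -> kf y < kf x.
Proof.
  intros Hx Hxy Hy.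
  assert (- kf x < - kf y); [|lra].
  apply (incr_function (fun a => - kf a) (-1) (172 / 100) (fun a => (3 - a * a) / ((1 + a * a) * (1 + a * a) * (1 + a * a)))); simpl; try lra.
  - intros t _ _. replace ((3 - t * t) / ((1 + t * t) * (1 + t * t) * (1 + t * t)))
      with (- (- (3 - t * t) / ((1 + t * t) * (1 + t * t) * (1 + t * t)))) by (field; generalize (one_b2_pos t); nra).
    apply (is_derive_opp (K:=R_AbsRing) (V:=R_NormedModule)). apply kf_deriv.
  - intros t H1 H2. assert (Ht := one_b2_pos t). apply Rdiv_lt_0_compat. nra.
    apply Rmult_lt_0_compat; [|lra]. apply Rmult_lt_0_compat; lra.
Qed.

Lemma kf_cont : continuity kf.
Proof.
  intros x. apply continuity_pt_filterlim. apply (ex_derive_continuous (K:=R_AbsRing) (V:=R_NormedModule)).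
  eexists; apply kf_deriv.
Qed.

Lemma kf_root : { r | 121275 / 100000 <= r <= 121325 / 100000 /\ kf r = 0 }.
Proof.
  destruct (IVT_gen kf (121275 / 100000) (121325 / 100000) 0 kf_cont) as [r [Hr Hk]].
  - pose proof kf_p1. pose proof kf_p2. rewrite Rmin_right by lra. rewrite Rmax_left by lra. lra.
  - rewrite Rmin_left in Hr by lra. rewrite Rmax_right in Hr by lra. exists r; auto.
Qed.

Definition rstar := proj1_sig kf_root.

Lemma rstar_bounds : 121275 / 100000 <= rstar <= 121325 / 100000.
Proof. unfold rstar; destruct kf_root as [r [H1 H2]]; simpl; auto. Qed.

Lemma rstar_root : kf rstar = 0.
Proof. unfold rstar; destruct kf_root as [r [H1 H2]]; simpl; auto. Qed.

Lemma kf_sign_pos t : 0 <= t < rstar -> 0 < kf t.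
Proof. intros Ht. pose proof rstar_bounds. rewrite <- rstar_root. apply kf_decr; lra. Qed.

Lemma kf_sign_neg t : rstar < t -> kf t < 0.
Proof.
  intros Ht. pose proof rstar_bounds. destruct (Rle_dec t (17 / 10)).
  - rewrite <- rstar_root. apply kf_decr; lra.
  - apply kf_large. lra.
Qed.

Definition Ff a := a ^ 2 * Tf a.

Lemma Ff_deriv a : is_derive Ff a (a / PI * kf a).
Proof.
  assert (Ha := one_b2_pos a). assert (Hpi := PI_RGT_0).
  unfold Ff, Tf, kf. auto_derive.
  - repeat split; nra.
  - unfold Rsqr. field. nra.
Qed.

Lemma strict_incr (f df : R -> R) x y : x < y -> (forall t, x <= t <= y -> is_derive f t (df t)) ->
  (forall t, x < t < y -> 0 < df t) -> f x < f y.
Proof.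
  intros Hxy Hd Hp. destruct (MVT_cor2 f df x y Hxy) as [c [E Hc]].
  - intros c Hc. apply is_derive_Reals. apply Hd; auto.
  - assert (0 < df c * (y - x)) by (apply Rmult_lt_0_compat; [apply Hp; auto|lra]). lra.
Qed.

Lemma Ff_max a : 0 < a -> a <> rstar -> Ff a < Ff rstar.
Proof.
  intros Ha Hne. pose proof rstar_bounds. assert (Hpi := PI_RGT_0).
  destruct (Rlt_dec a rstar) as [Hl|Hl].
  - apply (strict_incr Ff (fun t => t / PI * kf t)); auto.
    + intros; apply Ff_deriv.
    + intros t Ht. apply Rmult_lt_0_compat. apply Rdiv_lt_0_compat; lra. apply kf_sign_pos; lra.
  - assert (rstar < a) by lra.
    assert (- Ff a > - Ff rstar); [|lra].
    apply (strict_incr (fun t => - Ff t) (fun t => - (t / PI * kf t))); auto.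
    + intros; apply (is_derive_opp (K:=R_AbsRing) (V:=R_NormedModule)). apply Ff_deriv.
    + intros t Ht. assert (kf t < 0) by (apply kf_sign_neg; lra).
      assert (0 < t / PI) by (apply Rdiv_lt_0_compat; lra). nra.
Qed.

Lemma alpha_bounds : Rabs ((1 - 2 / PI * atan rstar) - 439 / 1000) <= 5 / 10000.
Proof.
  pose proof rstar_bounds as Hr. assert (P := PI_bounds).
  rewrite (atan_shift rstar) by lra.
  set (z := (rstar - 1) / (rstar + 1)).
  set (z1 := 21275 / 221275). set (z2 := 21325 / 221325).
  assert (Hz1 : z1 <= z).
  { unfold z, z1. apply (Rmult_le_reg_r ((rstar + 1) * 221275)). nra.
    unfold Rdiv. field_simplify; nra. }
  assert (Hz2 : z <= z2).
  { unfold z, z2. apply (Rmult_le_reg_r ((rstar + 1) * 221325)). nra.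
    unfold Rdiv. field_simplify; nra. }
  assert (Hz1p : 0 <= z1) by (unfold z1; lra).
  assert (U : atan z <= z2).
  { eapply Rle_trans; [apply atan_up5|]; [lra|]. unfold z2 in *.
    assert (z ^ 3 / 3 >= z ^ 5 / 5); [|lra].
    assert (0 <= z * z <= 1) by (unfold z1 in *; split; nra).
    replace (z ^ 5) with (z ^ 3 * (z * z)) by ring. assert (0 <= z ^ 3) by (apply pow_le; lra). nra. }
  assert (L : z1 - z1 ^ 3 / 3 <= atan z).
  { eapply Rle_trans; [apply atan_lo3; lra|]. destruct Hz1 as [Hz1|Hz1].
    - left; apply atan_increasing; auto.
    - rewrite Hz1; lra. }
  unfold z1, z2 in *.
  replace (1 - 2 / PI * (PI / 4 + atan z) - 439 / 1000) with (61 / 1000 - 2 * atan z / PI) by (field; lra).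
  assert (A1 : 2 * atan z / PI <= 615 / 10000).
  { apply (Rmult_le_reg_r PI); [lra|]. replace (2 * atan z / PI * PI) with (2 * atan z) by (field; lra). lra. }
  assert (A2 : 605 / 10000 <= 2 * atan z / PI).
  { apply (Rmult_le_reg_r PI); [lra|]. replace (2 * atan z / PI * PI) with (2 * atan z) by (field; lra). lra. }
  apply Rabs_le. lra.
Qed.

Lemma gc_Ff c I l : 0 <= l -> 0 < c * I -> g_c c I l = 16 / I * Ff (l * sqrt (c * I) / 2).
Proof. intros. rewrite gc_val by auto. unfold Ff. ring. Qed.

Theorem corollary2 (I c : R) (hI : 0 < I) (hc0 : 0 < c) (hc1 : c <= 1) :
  (exists lopt : R, 0 < lopt /\ forall l : R, 0 < l -> g_c c I l <= g_c c I lopt) /\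
  (forall lopt : R, 0 < lopt ->
     (forall l : R, 0 < l -> g_c c I l <= g_c c I lopt) ->
     Rabs (lopt * sqrt (c * I) - 2426 / 1000) <= 5 / 10000 /\
     Rabs (alpha_acc c I lopt - 439 / 1000) <= 5 / 10000).
Proof.
  assert (HcI : 0 < c * I) by nra.
  assert (Hq : 0 < sqrt (c * I)) by (apply sqrt_lt_R0; auto).
  set (q := sqrt (c * I)) in *.
  pose proof rstar_bounds as Hr.
  assert (H16 : 0 < 16 / I) by (apply Rdiv_lt_0_compat; lra).
  set (l0 := 2 * rstar / q).
  assert (Hl0 : 0 < l0) by (unfold l0; apply Rdiv_lt_0_compat; lra).
  assert (El0 : l0 * q / 2 = rstar) by (unfold l0; field; lra).
  split.
  - exists l0. split; auto. intros l Hl.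
    rewrite !gc_Ff by (auto; lra). fold q. rewrite El0.
    apply Rmult_le_compat_l; [lra|].
    destruct (Req_dec (l * q / 2) rstar) as [E|E].
    + rewrite E; lra.
    + left. apply Ff_max; auto. apply Rdiv_lt_0_compat; nra.
  - intros lopt Hlopt Hmax.
    assert (Ea : lopt * q / 2 = rstar).
    { destruct (Req_dec (lopt * q / 2) rstar) as [E|E]; auto. exfalso.
      assert (A := Hmax l0 Hl0). rewrite !gc_Ff in A by (auto; lra). fold q in A. rewrite El0 in A.
      assert (B := Ff_max (lopt * q / 2) ltac:(apply Rdiv_lt_0_compat; nra) E).
      assert (16 / I * Ff (lopt * q / 2) < 16 / I * Ff rstar) by (apply Rmult_lt_compat_l; auto).
      lra. }
    split.
    + replace (lopt * q) with (2 * rstar) by lra. apply Rabs_le. lra.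
    + rewrite alpha_val by (fold q; nra). fold q. rewrite Ea. apply alpha_bounds.
Qed.
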